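(* Let $f:\mathbb{R}^n\to\mathbb{R}$ be continuously differentiable and bounded below, with $\nabla f$ Lipschitz continuous on $\mathbb{R}^n$, and let $s$ be an integer with $0<s<n$. Then any optimal solution $\mathbf{x}^*$ of the problem (P): minimize $f(\mathbf{x})$ subject to $\|\mathbf{x}\|_0\le s$, is an $L_2(f)$-stationary point of (P), i.e. $\nabla_i f(\mathbf{x}^* )=0$ for $i\in I_1(\mathbf{x}^* )$ and $|\nabla_i f(\mathbf{x}^* )|\le L_2(f)M_s(\mathbf{x}^* )$ for $i\in I_0(\mathbf{x}^* )$.
   Context: $\|\mathbf{x}\|_0$ is the number of nonzero components; $I_1(\mathbf{x})=\{i:x_i\neq0\}$, $I_0(\mathbf{x})=\{i:x_i=0\}$; $M_s(\mathbf{x})$ is the $s$-th largest absolute value among the components of $\mathbf{x}$. For $i\neq j$, $\nabla_{i,j}f(\mathbf{x})\in\mathbb{R}^2$ is the vector of the $i$-th and $j$-th partial derivatives, and $L_{i,j}(f)$ is a constant with $\|\nabla_{i,j}f(\mathbf{x})-\nabla_{i,j}f(\mathbf{x}+\mathbf{d})\|\le L_{i,j}(f)\|\mathbf{d}\|$ for all $\mathbf{x}$ and all $\mathbf{d}$ with at most two nonzero components; $L_2(f)=\max_{i\neq j}L_{i,j}(f)$. *)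

(* Defs.v *)
From HB Require Import structures.
From mathcomp Require Import all_boot all_order all_algebra.
From mathcomp Require Import all_classical all_reals all_analysis.
Set Implicit Arguments. Unset Strict Implicit. Unset Printing Implicit Defensive.
Import Order.TTheory GRing.Theory Num.Theory.
Import numFieldNormedType.Exports.
Local Open Scope ring_scope.

Definition evec (R : realType) (n : nat) (i : 'I_n) : 'rV[R]_n := delta_mx 0 i.

Definition partial (R : realType) (n : nat) (f : 'rV[R]_n -> R) (i : 'I_n)
  (x : 'rV[R]_n) : R := 'D_(evec R i) f x.

Definition grad (R : realType) (n : nat) (f : 'rV[R]_n -> R) (x : 'rV[R]_n)
  : 'rV[R]_n := \row_i partial f i x.

Definition enorm (R : realType) (n : nat) (v : 'rV[R]_n) : R :=
  Num.sqrt (\sum_(k < n) v 0 k ^+ 2).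

Definition l0norm (R : realType) (n : nat) (x : 'rV[R]_n) : nat :=
  #|[set i : 'I_n | x 0 i != 0]|.

(* M_s(x): s-th largest absolute value among the components (with multiplicity), s >= 1 *)
Definition Ms (R : realType) (n : nat) (s : nat) (x : 'rV[R]_n) : R :=
  nth 0 (sort (fun a b : R => b <= a) [seq `|x 0 i| | i <- enum 'I_n]) s.-1.

Definition optimal_P (R : realType) (n : nat) (f : 'rV[R]_n -> R) (s : nat)
  (x : 'rV[R]_n) : Prop :=
  (l0norm x <= s)%N /\ forall y : 'rV[R]_n, (l0norm y <= s)%N -> f x <= f y.

(* L is a constant valid for L_{i,j}(f): for all x and all d supported on {i,j},
   || grad_{i,j} f(x) - grad_{i,j} f(x+d) ||_2 <= L ||d||_2 *)
Definition block_lip_const (R : realType) (n : nat) (f : 'rV[R]_n -> R)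
  (i j : 'I_n) (L : R) : Prop :=
  forall x d : 'rV[R]_n,
    (forall k : 'I_n, k != i -> k != j -> d 0 k = 0) ->
    Num.sqrt ((partial f i x - partial f i (x + d)) ^+ 2
              + (partial f j x - partial f j (x + d)) ^+ 2)
      <= L * enorm d.

(* Main.v *)
Require Import Defs.
From HB Require Import structures.
From mathcomp Require Import all_boot all_order all_algebra.
From mathcomp Require Import all_classical all_reals all_analysis.
From mathcomp Require Import ring lra zify.
From Stdlib Require Import Lia.
Import Order.TTheory GRing.Theory Num.Theory.
Import numFieldNormedType.Exports.
Local Open Scope ring_scope.

Section S.
Variables (R : realType) (n : nat) (f : 'rV[R]_n -> R).
Hypothesis hdiff : forall x : 'rV[R]_n, differentiable f x.

Lemma Dline (x d : 'rV[R]_n) (t : R) :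
  'D_1 (fun s : R => f (x + s *: d)) t = 'D_d f (x + t *: d).
Proof.
rewrite /derive; do 2 f_equal; apply/funext => h /=.
congr (h^-1 *: (f _ - f _)); rewrite scalerDl /= [h *: (1:R)]mulr1.
by rewrite addrC -addrA [t *: d + _]addrC addrA.
Qed.

Lemma derivable_line (x d : 'rV[R]_n) (t : R) :
  derivable (fun s : R => f (x + s *: d)) t 1.
Proof.
have : derivable f (x + t *: d) d by exact: diff_derivable.
rewrite /derivable => H.
have E : (fun h : R => h^-1 *: (((fun s : R => f (x + s *: d)) \o shift t) (h *: 1) - f (x + t *: d)))
  = (fun h : R => h^-1 *: ((f \o shift (x + t *: d)) (h *: d) - f (x + t *: d))).
  apply/funext => h /=.
  congr (h^-1 *: (f _ - f _)); rewrite scalerDl /= [h *: (1:R)]mulr1.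
  by rewrite addrC -addrA [t *: d + _]addrC addrA.
by rewrite E.
Qed.

Lemma Dlin (y u w : 'rV[R]_n) (a b : R) :
  'D_(a *: u + b *: w) f y = a * 'D_u f y + b * 'D_w f y.
Proof. by rewrite !deriveE // linearD !linearZ. Qed.

Lemma polyder (g0 k t : R) :
  is_derive t (1:R) (fun s : R => g0 * s + k * (s * s)) (g0 + k * (t + t)).
Proof.
apply: is_derive_eq. by rewrite /GRing.scale /= !mulr1.
Qed.

Lemma CS2 (p1 p2 q1 q2 : R) :
  p1 * q1 + p2 * q2 <= Num.sqrt (p1 ^+ 2 + p2 ^+ 2) * Num.sqrt (q1 ^+ 2 + q2 ^+ 2).
Proof.
rewrite -sqrtrM; last by apply: addr_ge0; apply: sqr_ge0.
have [h|h] := boolP (p1 * q1 + p2 * q2 <= 0).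
  by apply: le_trans h _; exact: sqrtr_ge0.
have h' : 0 <= p1 * q1 + p2 * q2 by move: h; rewrite -ltNge => /ltW.
rewrite -[X in X <= _]ger0_norm // -sqrtr_sqr ler_sqrt; last first.
  by apply: mulr_ge0; apply: addr_ge0; apply: sqr_ge0.
have := sqr_ge0 (p1 * q2 - p2 * q1); rewrite !expr2; nra.
Qed.

Lemma dv_coord (i j : 'I_n) (a b : R) (k : 'I_n) :
  (a *: evec R i + b *: evec R j) 0 k = a * (k == i)%:R + b * (k == j)%:R.
Proof. by rewrite !mxE. Qed.

Lemma enorm_dv (i j : 'I_n) (a b : R) : i != j ->
  enorm (a *: evec R i + b *: evec R j) = Num.sqrt (a ^+ 2 + b ^+ 2).
Proof.
move=> ij; rewrite /enorm (bigD1 i) //= (bigD1 j) /=; last by rewrite eq_sym.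
rewrite big1 ?addr0; last first.
  by move=> k /andP[ki kj]; rewrite dv_coord (negbTE ki) (negbTE kj) !mulr0 addr0 expr2 mulr0.
have ji : (j == i) = false by rewrite eq_sym (negbTE ij).
by rewrite !dv_coord !eqxx (negbTE ij) ji !mulr0 !mulr1 addr0 add0r.
Qed.

Variable L2 : R.
Hypothesis hL2 : forall i j : 'I_n, i != j -> block_lip_const f i j L2.

Lemma descent (x : 'rV[R]_n) (i j : 'I_n) (a b : R) : i != j ->
  f (x + (a *: evec R i + b *: evec R j)) <=
  f x + (a * partial f i x + b * partial f j x) + L2 / 2 * (a ^+ 2 + b ^+ 2).
Proof.
move=> ij.
set d := a *: evec R i + b *: evec R j.
set g0 := a * partial f i x + b * partial f j x.
set c := a ^+ 2 + b ^+ 2.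
set k := L2 / 2 * c.
pose phi := fun s : R => f (x + s *: d) - (g0 * s + k * (s * s)).
have Dphi : forall t : R, derivable phi t 1 /\
    derive1 phi t = 'D_d f (x + t *: d) - (g0 + k * (t + t)).
  move=> t; have hp := polyder g0 k t.
  have hl := derivable_line x d t.
  split; first exact: derivableB.
  rewrite derive1E deriveB // Dline.
  by rewrite derive_val.
have key : phi 1 <= phi 0.
  apply: (@ler0_derive1_le_cc R phi 0 1).
  - by move=> t _; exact: (Dphi t).1.
  - move=> t; rewrite in_itv /= => /andP[t0 t1].
    rewrite (Dphi t).2 /d Dlin -/d.
    have hs : forall k0 : 'I_n, k0 != i -> k0 != j -> (t *: d) 0 k0 = 0.
      by move=> k0 ki kj; rewrite mxE /d dv_coord (negbTE ki) (negbTE kj) !mulr0 addr0 mulr0.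
    have hb := @hL2 i j ij x _ hs.
    have Ed : t *: d = (t * a) *: evec R i + (t * b) *: evec R j.
      by rewrite /d scalerDr !scalerA.
    rewrite Ed enorm_dv // in hb.
    rewrite -Ed in hb.
    have hS : Num.sqrt ((t * a) ^+ 2 + (t * b) ^+ 2) = t * Num.sqrt c.
      rewrite !exprMn -mulrDr sqrtrM ?sqr_ge0 // sqrtr_sqr ger0_norm //; exact: ltW.
    rewrite hS in hb.
    set ui := partial f i x - partial f i (x + t *: d) in hb.
    set uj := partial f j x - partial f j (x + t *: d) in hb.
    have hcs := CS2 (- a) (- b) ui uj.
    rewrite !sqrrN -/c in hcs.
    have Sc : Num.sqrt c * Num.sqrt c = c.
      by rewrite -expr2 sqr_sqrtr // /c addr_ge0 // sqr_ge0.
    have S0 : 0 <= Num.sqrt c := sqrtr_ge0 _.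
    have U0 : 0 <= Num.sqrt (ui ^+ 2 + uj ^+ 2) := sqrtr_ge0 _.
    have eui : ui = partial f i x - partial f i (x + t *: d) by [].
    have euj : uj = partial f j x - partial f j (x + t *: d) by [].
    have eg : g0 = a * partial f i x + b * partial f j x by [].
    have ek : k = L2 / 2 * c by [].
    rewrite -!/(partial f _ _).
    move: hcs hb Sc S0 U0 eui euj eg ek.
    set S := Num.sqrt c; set U := Num.sqrt _.
    move=> hcs hb Sc S0 U0 eui euj eg ek.
    have : S * U <= S * (L2 * (t * S)) by rewrite ler_wpM2l.
    rewrite ek eg -Sc; rewrite eui euj in hcs.
    move=> h2; have h3 := le_trans hcs h2.
    have -> : L2 / 2 * (S * S) * (t + t) = S * (L2 * (t * S)) by field.
    move: h3; set A := S * (L2 * (t * S)); lra.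
  - apply: continuous_subspaceT => t.
    apply: differentiable_continuous; apply/derivable1_diffP; exact: (Dphi t).1.
  - by rewrite in_itv /= lexx ler01.
  - by rewrite in_itv /= lexx ler01.
  - exact: ler01.
move: key; rewrite /phi scale1r scale0r addr0 !mulr0 !mulr1 addr0 subr0.
lra.
Qed.
End S.
Lemma l0_count (R : realType) (n : nat) (x : 'rV[R]_n) :
  l0norm x = count (fun v : R => v != 0) [seq `|x 0 k| | k <- enum 'I_n].
Proof.
rewrite count_map /l0norm cardsE cardE /enum_mem size_filter.
rewrite count_filter; apply: eq_count => k /=; by rewrite normr_eq0 andbT.
Qed.

Lemma Ms_witness (R : realType) (n s : nat) (x : 'rV[R]_n) :
  (0 < s)%N -> (s <= n)%N -> l0norm x = s ->
  exists j : 'I_n, x 0 j != 0 /\ `|x 0 j| = Ms s x.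
Proof.
move=> s0 sn hl.
set lst := [seq `|x 0 k| | k <- enum 'I_n].
set le' := fun a b : R => b <= a.
set srt := sort le' lst.
have sz : size srt = n by rewrite size_sort size_map size_enum_ord.
have Mdef : Ms s x = nth 0 srt s.-1 by [].
have Min : Ms s x \in lst.
  by rewrite Mdef -(mem_sort le') mem_nth // sz; case: s s0 sn {hl Mdef}.
have [j _ Ej] := mapP Min.
exists j; split; last by rewrite Ej.
apply/negP => /eqP xj0.
have M0 : Ms s x = 0 by rewrite Ej xj0 normr0.
have srt_sorted : sorted le' srt.
  by apply: sort_sorted => a b; rewrite /le'; case: (leP a b) => h; rewrite ?h ?orbT // ltW.
have nonneg : forall v, v \in srt -> 0 <= v.
  by move=> v; rewrite mem_sort => /mapP[k _ ->].
have cnt : count (fun v : R => v != 0) srt = s.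
  by rewrite (permP (permEl (perm_sort le' lst)) (fun v : R => v != 0)) -l0_count.
have cdrop : count (fun v : R => v != 0) (drop s.-1 srt) = 0%N.
  apply/eqP; rewrite -leqn0 leqNgt -has_count; apply/hasPn => v.
  move=> /(nthP 0) [m]; rewrite size_drop nth_drop => hm <-.
  rewrite negbK eq_le nonneg ?andbT; last by rewrite mem_nth //; move: hm; rewrite sz; lia.
  rewrite -[X in _ <= X]M0 Mdef.
  have tr : transitive le' by move=> a b c; rewrite /le' => h1 h2; apply: le_trans h2 h1.
  have rf : reflexive le' by move=> a; rewrite /le'.
  apply: (@sorted_leq_nth _ le' tr rf 0 srt srt_sorted s.-1 (s.-1 + m)).
  - by rewrite inE sz; lia.
  - by rewrite inE; move: hm; rewrite sz; lia.
  - by rewrite leq_addr.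
have ctake : (count (fun v : R => v != 0%R) (take s.-1 srt) <= s.-1)%N.
  by apply: leq_trans (count_size _ _) _; rewrite size_take_min geq_minl.
move: ctake.
by move: cnt; rewrite -{1}(cat_take_drop s.-1 srt) count_cat cdrop addn0 => ->; lia.
Qed.

Lemma Ms_ge0 (R : realType) (n s : nat) (x : 'rV[R]_n) : 0 <= Ms s x.
Proof.
rewrite /Ms; set srt := sort _ _.
have [h|h] := ltnP s.-1 (size srt).
  have : nth 0 srt s.-1 \in srt by exact: mem_nth.
  by rewrite mem_sort => /mapP[k _ ->].
by rewrite nth_default.
Qed.

Lemma quad (R : realType) (g L A : R) : 0 <= L -> 0 <= A ->
  (forall t : R, 0 <= t * g + L / 2 * (A + t ^+ 2)) -> g ^+ 2 <= L ^+ 2 * A.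
Proof.
move=> L0 A0 h.
have [L00|Lp] := eqVneq L 0.
  have := h (- g); rewrite L00 mul0r mul0r addr0 => h'.
  rewrite ?L00 expr0n /= mul0r; nra.
have Lgt : 0 < L by rewrite lt_neqAle eq_sym Lp L0.
have := h (- g / L); set t := - g / L => h'.
have ht : t * L = - g by rewrite /t mulrVK ?unitfE.
have := mulr_ge0 L0 h'.
rewrite !expr2; nra.
Qed.

Lemma sq_to_abs (R : realType) (g L a : R) : 0 <= L ->
  g ^+ 2 <= L ^+ 2 * a ^+ 2 -> `|g| <= L * `|a|.
Proof.
move=> L0 h; rewrite leNgt; apply/negP => hlt.
have e1 : `|g| ^+ 2 = g ^+ 2 by rewrite real_normK ?num_real.
have e2 : `|a| ^+ 2 = a ^+ 2 by rewrite real_normK ?num_real.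
have a0 : 0 <= `|a| := normr_ge0 a.
have : 0 <= L * `|a| by rewrite mulr_ge0.
move: e1 e2 h hlt; rewrite !expr2 => e1 e2 h hlt h0.
nra.
Qed.

Definition supp (R : realType) (n : nat) (x : 'rV[R]_n) := [set k : 'I_n | x 0 k != 0].
Arguments supp {R n}.

Lemma l0_modA (R : realType) (n : nat) (x y : 'rV[R]_n) (i : 'I_n) :
  (forall k, k != i -> y 0 k = x 0 k) ->
  (l0norm y <= l0norm x + (x 0%R i == 0%R))%N.
Proof.
move=> hk.
have sub : supp y \subset i |: supp x.
  apply/fintype.subsetP => k; rewrite !inE.
  have [->|ki] := eqVneq k i; first by [].
  by rewrite hk.
have := subset_leq_card sub; rewrite cardsU1 inE negbK /l0norm -/(supp y) -/(supp x).
by rewrite addnC.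
Qed.

Lemma l0_modB (R : realType) (n : nat) (x y : 'rV[R]_n) (i j : 'I_n) :
  (forall k, k != i -> k != j -> y 0 k = x 0 k) -> y 0 j = 0 -> x 0 j != 0 ->
  (l0norm y <= l0norm x)%N.
Proof.
move=> hk yj xj.
have sub : supp y \subset i |: (supp x :\ j).
  apply/fintype.subsetP => k; rewrite !inE.
  have [->|ki] := eqVneq k i; first by [].
  have [->|kj] := eqVneq k j; first by rewrite yj ?eqxx.
  by rewrite hk.
have := subset_leq_card sub; rewrite cardsU1.
have jin : j \in supp x by rewrite inE.
have := cardsD1 j (supp x); rewrite jin /=.
rewrite /l0norm -/(supp y) -/(supp x).
case: (i \notin _) => /=; lia.
Qed.

Lemma add_coord (R : realType) (n : nat) (x : 'rV[R]_n) (i j : 'I_n) (a b : R) (k : 'I_n) :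
  (x + (a *: evec R i + b *: evec R j)) 0 k = x 0 k + (a * (k == i)%:R + b * (k == j)%:R).
Proof. by rewrite mxE dv_coord. Qed.

Theorem corollary2p2 (R : realType) (n s : nat) (f : 'rV[R]_n -> R)
  (hdiff : forall x : 'rV[R]_n, differentiable f x)
  (hC1 : continuous (grad f))
  (hbdd : exists m : R, forall x : 'rV[R]_n, m <= f x)
  (hlip : exists L : R, forall x y : 'rV[R]_n,
            enorm (grad f x - grad f y) <= L * enorm (x - y))
  (hs0 : (0 < s)%N) (hsn : (s < n)%N)
  (L2 : R)
  (hL2 : forall i j : 'I_n, i != j -> block_lip_const f i j L2)
  (xs : 'rV[R]_n) (hopt : optimal_P f s xs) :
  (forall i : 'I_n, xs 0 i != 0 -> partial f i xs = 0) /\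
  (forall i : 'I_n, xs 0 i = 0 -> `|partial f i xs| <= L2 * Ms s xs).
Proof.
have D := @descent R n f hdiff L2 hL2.
have [hfeas hmin] := hopt.
have n2 : (1 < n)%N by lia.
have other : forall i : 'I_n, exists j : 'I_n, i != j.
  move=> i; have [i0|i0] := eqVneq (val i) 0%N.
    exists (Ordinal n2); apply/eqP => /(congr1 val) /= e; change (nat_of_ord i = 0%N) in i0; lia.
  have n0 : (0 < n)%N by lia.
  exists (Ordinal n0); apply/eqP => /(congr1 val) /= e; move/eqP: i0; change (nat_of_ord i <> 0%N -> False); lia.
have L20 : 0 <= L2.
  have n0 : (0 < n)%N by lia.
  have [j ij] := other (Ordinal n0).
  set i := Ordinal n0 in ij.
  have hs : forall k : 'I_n, k != i -> k != j ->
      (1 *: evec R i + 0 *: evec R j) 0 k = 0.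
    by move=> k ki kj; rewrite dv_coord (negbTE ki) (negbTE kj) !mulr0 addr0.
  have := @hL2 i j ij 0 _ hs.
  rewrite enorm_dv // expr1n expr0n /= addr0 sqrtr1 mulr1.
  by apply: le_trans; exact: sqrtr_ge0.
have part1 : forall i : 'I_n, (xs 0 i != 0) || (l0norm xs < s)%N ->
    partial f i xs = 0.
  move=> i hi.
  have [j ij] := other i.
  have key : forall t : R, 0 <= t * partial f i xs + L2 / 2 * (0 + t ^+ 2).
    move=> t.
    set y := xs + (t *: evec R i + 0 *: evec R j).
    have fy : (l0norm y <= s)%N.
      have hk : forall k, k != i -> y 0 k = xs 0 k.
        move=> k ki; rewrite /y add_coord (negbTE ki) mulr0 add0r.
        by rewrite mul0r addr0.
      have := @l0_modA _ _ _ _ _ hk.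
      case/orP: hi => [hi|hi]; first by rewrite (negbTE hi) addn0 => h; lia.
      by move=> h; case: (_ == _) h => /=; lia.
    have h1 := hmin y fy.
    have h2 := D xs i j t 0 ij.
    rewrite -/y mul0r addr0 expr0n /= in h2.
    rewrite add0r; lra.
  have := @quad _ _ _ _ L20 (lexx 0) key.
  rewrite mulr0 => hq.
  apply/eqP; rewrite -sqrf_eq0 eq_le hq /=; exact: sqr_ge0.
split.
  by move=> i hi; apply: part1; rewrite hi.
move=> i hi.
have [lt|ge] := ltnP (l0norm xs) s.
  rewrite part1; last by rewrite lt orbT.
  by rewrite normr0 mulr_ge0 // Ms_ge0.
have eqs : l0norm xs = s by apply/eqP; rewrite eqn_leq hfeas ge.
have [j [xj Mj]] := @Ms_witness _ _ _ _ hs0 (ltnW hsn) eqs.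
have ij : i != j by apply/eqP => e; rewrite -e hi eqxx in xj.
have gj : partial f j xs = 0 by apply: part1; rewrite xj.
have key : forall t : R, 0 <= t * partial f i xs + L2 / 2 * (xs 0 j ^+ 2 + t ^+ 2).
  move=> t.
  set y := xs + (t *: evec R i + (- xs 0 j) *: evec R j).
  have fy : (l0norm y <= s)%N.
    have hk : forall k, k != i -> k != j -> y 0 k = xs 0 k.
      by move=> k ki kj; rewrite /y add_coord (negbTE ki) (negbTE kj) !mulr0 addr0 addr0.
    have yj : y 0 j = 0.
      rewrite /y add_coord eqxx eq_sym (negbTE ij) mulr0 mulr1 add0r; exact: subrr.
    have := @l0_modB _ _ _ _ _ _ hk yj xj; lia.
  have h1 := hmin y fy.
  have h2 := D xs i j t (- xs 0 j) ij.
  rewrite -/y gj mulr0 addr0 sqrrN in h2.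
  lra.
have := @quad _ _ _ _ L20 (sqr_ge0 (xs 0 j)) key.
rewrite -Mj; exact: sq_to_abs.
Qed.
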